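(* Let $G=([n],E)$ be a simple graph. Then $\varepsilon(G)\le n!\,\mathrm{Vol}(\mathrm{Stab}(G))$, where $\mathrm{Vol}$ is $n$-dimensional Lebesgue volume.
   Context: For an undirected simple graph $G=(V,E)$, $\varepsilon(G)$ denotes the maximum, over all acyclic orientations of $E$, of the number of linear extensions of the partial order induced on $V$ (where $u<v$ iff there is a directed path from $u$ to $v$; a linear extension of a poset on an $n$-element set is an order-preserving bijection onto $[n]$). The stable polytope $\mathrm{Stab}(G)\subseteq\mathbb{R}^n$ is the convex hull of the vectors $e_I=\sum_{i\in I}e_i$ over all stable (independent) sets $I$ of $G$, where $e_1,\dots,e_n$ is the standard basis (and $e_\emptyset=0$). *)

(* Defs.v *)
From Stdlib Require Import Reals.
From mathcomp Require Import all_boot perm.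
Set Implicit Arguments. Unset Strict Implicit. Unset Printing Implicit Defensive.

Definition simple_graph (n : nat) (e : rel 'I_n) : Prop :=
  (forall x, e x x = false) /\ (forall x y, e x y = e y x).

Definition arcs_rel (n : nat) (O : {set 'I_n * 'I_n}) : rel 'I_n :=
  fun u v => (u, v) \in O.

Definition acyclic_orientation (n : nat) (e : rel 'I_n) (O : {set 'I_n * 'I_n}) : bool :=
  [forall u, forall v, ((u, v) \in O) ==> e u v] &&
  [forall u, forall v, e u v ==> (((u, v) \in O) (+) ((v, u) \in O))] &&
  [forall u, forall v, ((u, v) \in O) ==> ~~ connect (arcs_rel O) v u].

Definition ind_lt (n : nat) (O : {set 'I_n * 'I_n}) (u v : 'I_n) : bool :=
  (u != v) && connect (arcs_rel O) u v.

Definition n_linext (n : nat) (O : {set 'I_n * 'I_n}) : nat :=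
  #|[set s : {perm 'I_n} | [forall u, forall v, ind_lt O u v ==> (s u < s v)]]|.

Definition eps (n : nat) (e : rel 'I_n) : nat :=
  \max_(O : {set 'I_n * 'I_n} | acyclic_orientation e O) n_linext O.

Definition stable (n : nat) (e : rel 'I_n) (I : {set 'I_n}) : bool :=
  [forall x in I, forall y in I, ~~ e x y].

Definition sumR (A : Type) (l : seq A) (f : A -> R) : R :=
  foldr (fun a acc => Rplus (f a) acc) R0 l.
Definition prodR (A : Type) (l : seq A) (f : A -> R) : R :=
  foldr (fun a acc => Rmult (f a) acc) R1 l.

(* Stab(G) = conv { e_I : I stable } in R^n (points are functions 'I_n -> R) *)
Definition in_Stab (n : nat) (e : rel 'I_n) (x : 'I_n -> R) : Prop :=
  exists lam : {set 'I_n} -> R,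
    (forall I, Rle R0 (lam I)) /\
    (forall I, ~~ stable e I -> lam I = R0) /\
    sumR (enum {set 'I_n}) lam = R1 /\
    (forall i, x i = sumR (enum {set 'I_n}) (fun I => if i \in I then lam I else R0)).

Definition in_box (n : nat) (bx : ('I_n -> R) * ('I_n -> R)) (x : 'I_n -> R) : Prop :=
  forall i, Rle (bx.1 i) (x i) /\ Rle (x i) (bx.2 i).
Definition box_vol (n : nat) (bx : ('I_n -> R) * ('I_n -> R)) : R :=
  prodR (enum 'I_n) (fun i => Rmax R0 (Rminus (bx.2 i) (bx.1 i))).

Definition box_cover_sum (n : nat) (S : ('I_n -> R) -> Prop) (r : R) : Prop :=
  exists l : seq (('I_n -> R) * ('I_n -> R)),
    (forall x, S x -> exists bx, List.In bx l /\ in_box bx x) /\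
    r = sumR l (@box_vol n).

(* v is the n-dimensional volume of S, defined as the Jordan outer content
   (infimum of total volumes of finite closed-box covers). For compact S
   (e.g. a polytope) this coincides with the Lebesgue measure. *)
Definition is_volume (n : nat) (S : ('I_n -> R) -> Prop) (v : R) : Prop :=
  (forall r, box_cover_sum S r -> Rle v r) /\
  (forall w, (forall r, box_cover_sum S r -> Rle w r) -> Rle w v).

(* Main.v *)
From HB Require Import structures.
From Stdlib Require Import Reals Lra.
From mathcomp Require Import all_boot perm zify.
Require Import Defs.
Set Implicit Arguments. Unset Strict Implicit. Unset Printing Implicit Defensive.


Lemma card_interval N a b : a <= b -> b <= N -> #|[set k : 'I_N | (a <= k) && (k < b)]| = b - a.
Proof.
move=> ab bN.
rewrite cardsE cardE /enum_mem size_filter -enumT.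
rewrite -(count_map val (fun x => (a <= x) && (x < b))) val_enum_ord.
have -> : iota 0 N = iota 0 a ++ iota a (b - a) ++ iota b (N - b).
  have E1 : iota a (b - a) ++ iota b (N - b) = iota a (N - a).
    have {2}-> : b = a + (b - a) by lia.
    by rewrite -iotaD; congr iota; lia.
  have {3}-> : a = 0 + a by [].
  by rewrite E1 -iotaD; congr iota; lia.
rewrite !count_cat.
rewrite (eq_in_count (a2 := pred0)); last first.
  by move=> x; rewrite mem_iota /= add0n ltnNge => /negbTE ->.
rewrite (eq_in_count (a2 := predT) (s := iota a _)); last first.
  by move=> x; rewrite mem_iota subnKC.

rewrite (eq_in_count (a2 := pred0) (s := iota b _)); last first.
  by move=> x; rewrite mem_iota /= => /andP [H _]; rewrite ltnNge H andbF.
by rewrite !count_pred0 count_predT size_iota addn0.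
Qed.

Lemma sumcard (T : finType) (P : pred T) : #|[set k | P k]| = \sum_k (P k : nat).
Proof. by rewrite cardsE -sum1_card big_mkcond. Qed.

HB.instance Definition _ := Monoid.isComLaw.Build R R0 Rplus (fun a b c => esym (Rplus_assoc a b c)) Rplus_comm Rplus_0_l.
Lemma sumRE (A : Type) (l : seq A) f : sumR l f = \big[Rplus/R0]_(a <- l) f a.
Proof. elim: l => [|a l IH]; rewrite ?big_nil ?big_cons //= IH //. Qed.
Lemma INR_sum (I : Type) (r : seq I) (P : pred I) (F : I -> nat) :
  INR (\sum_(i <- r | P i) F i)%N = \big[Rplus/R0]_(i <- r | P i) INR (F i).
Proof. by rewrite (big_morph INR plus_INR (erefl (INR 0))). Qed.
Lemma big_Rmult_r (I : Type) (r : seq I) (P : pred I) (F : I -> R) c :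
  Rmult (\big[Rplus/R0]_(i <- r | P i) F i) c = \big[Rplus/R0]_(i <- r | P i) (Rmult (F i) c).
Proof. elim/big_rec2: _ => [|i y1 y2 _ <-]; ring. Qed.

Lemma union_bound (T : finType) (X : Type) (A : {set T}) (l : seq X) (F : X -> {set T}) :
  (forall y, y \in A -> exists x, List.In x l /\ y \in F x) ->
  #|A| <= sumn (map (fun x => #|F x|) l).
Proof.
elim: l A => [|x l IH] A H /=.
  rewrite leqn0 cards_eq0; apply/eqP; apply/setP => y; rewrite inE.
  by apply/negP => /H [x [[]]].
rewrite -(cardsID (F x) A) leq_add //.
  by apply: subset_leq_card; apply: subsetIr.
apply: IH => y; rewrite inE => /andP [yF yA].
have [z [[<-|zl] yz]] := H y yA; first by rewrite yz in yF.
by exists z.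
Qed.

Definition Rleb (x y : R) : bool := if Rle_dec x y then true else false.
Lemma RlebP x y : reflect (Rle x y) (Rleb x y).
Proof. by rewrite /Rleb; case: Rle_dec => H; constructor. Qed.

Definition Sset n N (bx : ('I_n -> R) * ('I_n -> R)) (i : 'I_n) : pred 'I_N.+1 :=
  fun k => Rleb (bx.1 i) (Rdiv (INR k) (INR N)) && Rleb (Rdiv (INR k) (INR N)) (bx.2 i).
Definition Bset n N (bx : ('I_n -> R) * ('I_n -> R)) : {set {ffun 'I_n -> 'I_N.+1}} :=
  [set y | y \in family (@Sset n N bx)].

Lemma coord_count n N (bx : ('I_n -> R) * ('I_n -> R)) i : 0 < N ->
  Rle (INR #|@Sset n N bx i|) (Rplus (Rmult (INR N) (Rmax 0 (Rminus (bx.2 i) (bx.1 i)))) 1).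
Proof.
move=> N0.
have HN : Rlt 0 (INR N) by apply: lt_0_INR; apply/ltP.
have Hm : Rle 0 (Rmult (INR N) (Rmax 0 (Rminus (bx.2 i) (bx.1 i)))).
  apply: Rmult_le_pos; [lra | apply: Rmax_l].
set S := @Sset n N bx i.
case: (pickP S) => [k0 Sk0|S0]; last first.
  rewrite eq_card0 //=; lra.
case: (arg_minnP (fun k : 'I_N.+1 => nat_of_ord k) Sk0) => kmin Smin Hmin.
case: (arg_maxnP (fun k : 'I_N.+1 => nat_of_ord k) Sk0) => kmax Smax Hmax.
have Hc : #|S| <= kmax - kmin + 1.
  rewrite cardE -(size_map val (enum S)) -(size_iota kmin (kmax - kmin + 1)).
  apply: uniq_leq_size; first by rewrite (map_inj_uniq val_inj) enum_uniq.
  move=> x /mapP [k]; rewrite mem_enum => Sk ->; rewrite mem_iota.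
  have h1 := Hmin k Sk; have h2 := Hmax k Sk; simpl in h1, h2; apply/andP; split; [exact: h1 | rewrite -[\val k]/(nat_of_ord k); lia].
have Hd : Rle (Rminus (INR kmax) (INR kmin)) (Rmult (INR N) (Rmax 0 (Rminus (bx.2 i) (bx.1 i)))).
  move: Smin Smax; rewrite /S /Sset => /andP [/RlebP H1 _] /andP [_ /RlebP H2].
  have : Rle (Rminus (INR kmax) (INR kmin)) (Rmult (INR N) (Rminus (bx.2 i) (bx.1 i))).
    have E1 : INR kmax = Rmult (INR N) (Rdiv (INR kmax) (INR N)) by field; lra.
    have E2 : INR kmin = Rmult (INR N) (Rdiv (INR kmin) (INR N)) by field; lra.
    rewrite E1 E2; nra.
  have := Rmax_r 0 (Rminus (bx.2 i) (bx.1 i)); nra.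
have Hle : (kmin <= kmax)%N by apply: Hmin.
apply: Rle_trans (le_INR _ _ (leP Hc)) _.
rewrite plus_INR minus_INR; last by apply/leP.
simpl INR at 3; lra.
Qed.

Lemma INR_foldr (A : Type) (s : seq A) (g : A -> nat) (h : A -> R) :
  (forall x, Rle (INR (g x)) (h x)) -> Rle (INR (foldr muln 1 (map g s))) (prodR s h).
Proof.
move=> H; elim: s => [|x s IH] /=; first by apply: Rle_refl.
rewrite mult_INR; apply: Rmult_le_compat => //; exact: pos_INR.
Qed.

Lemma Bset_card n N (bx : ('I_n -> R) * ('I_n -> R)) : 0 < N ->
  Rle (INR #|@Bset n N bx|)
      (prodR (enum 'I_n) (fun i => Rplus (Rmult (INR N) (Rmax 0 (Rminus (bx.2 i) (bx.1 i)))) 1)).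
Proof.
move=> N0; rewrite /Bset cardsE card_family.
apply: INR_foldr => i; exact: coord_count.
Qed.

Section Good.
Variables (n : nat) (e : rel 'I_n) (O : {set 'I_n * 'I_n}).
Hypothesis He : simple_graph e.
Hypothesis HO : acyclic_orientation e O.

Lemma arc_edge u v : (u, v) \in O -> e u v.
Proof. case/andP: HO => /andP [/forallP H _] _ => uv; exact: (implyP (forallP (H u) v) uv). Qed.

Lemma edge_arc u v : e u v -> ((u, v) \in O) || ((v, u) \in O).
Proof.
case/andP: HO => /andP [_ /forallP H] _ => uv.
by move: (implyP (forallP (H u) v) uv); case: ((u,v) \in O); case: ((v,u) \in O).
Qed.

Lemma arc_lt u v : (u, v) \in O -> ind_lt O u v.
Proof.
move=> uv; rewrite /ind_lt; apply/andP; split; last by apply: connect1.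
apply/eqP => Euv; move: (arc_edge uv); rewrite Euv; case: He => ->.
done.
Qed.

Definition mf (f : 'I_n -> nat) v := \max_(u | (u, v) \in O) f u.

Definition goodf (f : 'I_n -> nat) := forall u v, (u, v) \in O -> f u < f v.

Lemma mf_le f v : goodf f -> mf f v <= f v.
Proof. move=> G; apply/bigmax_leqP => u uv; exact: ltnW (G _ _ uv). Qed.

Lemma goodf_inj f g : goodf f -> goodf g ->
  (forall v, f v - mf f v = g v - mf g v) -> forall v, f v = g v.
Proof.
move=> Gf Gg Hy.
suff H : forall k v, f v < k -> f v = g v by move=> v; apply: (H (f v).+1).
elim=> [//|k IH] v fv.
have Em : mf f v = mf g v.
  apply: eq_bigr => u uv; apply: IH; apply: leq_trans (Gf _ _ uv) _; done.
by rewrite -(subnK (mf_le v Gf)) -(subnK (mf_le v Gg)) Hy Em.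
Qed.

Definition Aset (f : 'I_n -> nat) (k : nat) := [set v | (mf f v <= k) && (k < f v)].

Lemma Aset_stable f k : stable e (Aset f k).
Proof.
apply/forallP => x; apply/implyP => xA; apply/forallP => y; apply/implyP => yA.
apply/negP => exy.
move: xA yA; rewrite !inE => /andP [mx kx] /andP [my ky].
case/orP: (edge_arc exy) => a.
  have : f x <= mf f y := @leq_bigmax_cond _ (fun u => (u, y) \in O) f x a.
  move=> H; have := leq_ltn_trans H (leq_ltn_trans my kx); by rewrite ltnn.
have : f y <= mf f x := @leq_bigmax_cond _ (fun u => (u, x) \in O) f y a.
move=> H; have := leq_ltn_trans H (leq_ltn_trans mx ky); by rewrite ltnn.
Qed.

Lemma good_Stab f N : goodf f -> 0 < N -> (forall v, f v <= N) ->
  in_Stab e (fun i => Rdiv (INR (f i - mf f i)) (INR N)).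
Proof.
move=> G N0 fN.
have HN : Rlt 0 (INR N) by apply: lt_0_INR; apply/ltP.
pose c (I : {set 'I_n}) := #|[set k : 'I_N | Aset f k == I]|.
exists (fun I => Rdiv (INR (c I)) (INR N)).
split; [|split; [|split]].
- move=> I; apply: Rmult_le_pos; [exact: pos_INR | apply: Rlt_le; exact: Rinv_0_lt_compat].
- move=> I nI; rewrite /c.
  rewrite (_ : #|_| = 0) /= ?Rdiv_0_l //.
  apply: eq_card0 => k; rewrite !inE; apply/negP => /eqP AI.
  by move: nI; rewrite -AI Aset_stable.
- rewrite sumRE big_enum /=.
  rewrite -big_Rmult_r -INR_sum /c.
  rewrite (_ : (\sum_(i in _) _)%N = N); first by field; apply: Rgt_not_eq.
  under eq_bigr do rewrite sumcard.
  rewrite exchange_big /=.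
  rewrite -[RHS]card_ord -sum1_card; apply: eq_bigr => k _.
  by rewrite -big_mkcond /= (big_pred1 (Aset f k)) // => I; rewrite eq_sym.
- move=> i; rewrite sumRE big_enum /=.
  rewrite (eq_bigr (fun I : {set 'I_n} => Rdiv (INR (if i \in I then c I else 0)) (INR N))); last first.
    by move=> I _; case: (i \in I) => //=; rewrite Rdiv_0_l.
  rewrite /Rdiv -big_Rmult_r -INR_sum; congr (Rmult (INR _) _).
  rewrite -(card_interval (mf_le i G) (fN i)) /c.
  rewrite -big_mkcondr /=.
  under eq_bigr => I _ do rewrite sumcard.
  rewrite exchange_big /= [LHS]sumcard; apply: eq_bigr => k _.
  rewrite big_mkcond /= (bigD1 (Aset f k)) //= big1 ?addn0; last first.
    by move=> I /negbTE; rewrite eq_sym => ->; case: (_ \in _).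
  by rewrite eqxx /Aset inE; case: (_ && _).
Qed.

Lemma tuple_lt N (t : n.-tuple 'I_N) (i j : 'I_n) : sorted ltn (map val t) -> i < j -> tnth t i < tnth t j.
Proof.
move=> St ij.
have E k : (tnth t k : nat) = nth 0 (map val t) k.
  by rewrite (tnth_nth (tnth t k)) -(nth_map (tnth t k) 0) // size_tuple.
rewrite !E; apply: (sorted_ltn_nth ltn_trans 0 St) => //; by rewrite inE size_map size_tuple.
Qed.

Definition Lset := [set s : {perm 'I_n} | [forall u, forall v, ind_lt O u v ==> (s u < s v)]].
Definition Tset N := [set t : n.-tuple 'I_N | sorted ltn (map val t)].

Definition fst N (p : {perm 'I_n} * n.-tuple 'I_N) (v : 'I_n) : nat := (tnth p.2 (p.1 v)).+1.
Definition Psi N (p : {perm 'I_n} * n.-tuple 'I_N) : {ffun 'I_n -> 'I_N.+1} :=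
  [ffun v => inord (fst p v - mf (fst p) v)].

Lemma fst_good N p : p.1 \in Lset -> p.2 \in Tset N -> goodf (@fst N p).
Proof.
case: p => s t; rewrite !inE /= => /forallP Ls Tt u v uv.
rewrite /fst ltnS /=; apply: tuple_lt => //.
exact: (implyP (forallP (Ls u) v) (arc_lt uv)).
Qed.

Lemma fst_le N p v : @fst N p v <= N.
Proof. by rewrite /fst. Qed.

Lemma Psi_inj N : {in [set p | (p.1 \in Lset) && (p.2 \in Tset N)] &, injective (@Psi N)}.
Proof.
move=> [s t] [s' t'] H1 H2 EP.
move: H1 H2; rewrite [_ \in _]in_set [_ \in [set p | _]]in_set /= => /andP [Ls Tt] /andP [Ls' Tt'].
have G := @fst_good N (s, t) Ls Tt.
have G' := @fst_good N (s', t') Ls' Tt'.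
have Ef : forall v, @fst N (s, t) v = @fst N (s', t') v.
  apply: goodf_inj => // v.
  have := congr1 (fun g : {ffun 'I_n -> 'I_N.+1} => nat_of_ord (g v)) EP; rewrite /Psi !ffunE /= !inordK //.
    by rewrite ltnS; apply: leq_trans (leq_subr _ _) (fst_le _ _).
  by rewrite ltnS; apply: leq_trans (leq_subr _ _) (fst_le _ _).
have Ev v : val (tnth t (s v)) = val (tnth t' (s' v)) by have := Ef v; rewrite /fst /=; case.
move: Tt Tt'; rewrite !inE => Tt Tt'.
have Et : t = t'.
  apply: val_inj; apply: (inj_map val_inj); apply: (irr_sorted_eq ltn_trans ltnn Tt Tt').
  move=> x; apply/mapP/mapP => [[y /tnthP [i ->] ->]|[y /tnthP [i ->] ->]].
    exists (tnth t' (s' ((s^-1)%g i))); first exact: mem_tnth.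
    by rewrite -Ev permKV.
  exists (tnth t (s ((s'^-1)%g i))); first exact: mem_tnth.
  by rewrite Ev permKV.
subst t'; congr pair.
apply/perm.permP => v; apply: val_inj; apply/eqP.
have U : uniq t.
  have := sorted_uniq ltn_trans ltnn Tt; by rewrite (map_inj_uniq val_inj).
have := Ev v => /val_inj E.
rewrite -(nth_uniq (tnth t (s v)) _ _ U) ?size_tuple ?ltn_ord //.
by rewrite -!tnth_nth E.
Qed.

Lemma count_main N (l : seq (('I_n -> R) * ('I_n -> R))) : 0 < N ->
  (forall x, in_Stab e x -> exists bx, List.In bx l /\ in_box bx x) ->
  n_linext O * 'C(N, n) <= sumn (map (fun bx => #|@Bset n N bx|) l).
Proof.
move=> N0 Hcov.
set D := [set p : {perm 'I_n} * n.-tuple 'I_N | (p.1 \in Lset) && (p.2 \in Tset N)].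
have -> : n_linext O * 'C(N, n) = #|@Psi N @: D|.
  rewrite (card_in_imset (@Psi_inj N)).
  have -> : #|D| = #|setX Lset (Tset N)| by rewrite /D /setX.
  by rewrite cardsX -card_ltn_sorted_tuples.
apply: union_bound => y /imsetP [p Dp ->].
move: Dp; rewrite [_ \in D]in_set => /andP [Lp Tp].
have G := fst_good Lp Tp.
have [bx [inl Hb]] := Hcov _ (good_Stab G N0 (fun v => fst_le p v)).
exists bx; split => //.
rewrite /Bset inE; apply/familyP => i; rewrite /Sset ffunE unfold_in /= inordK; last first.
  by rewrite ltnS; apply: leq_trans (leq_subr _ _) (fst_le _ _).
case: (Hb i) => /= h1 h2; apply/andP; split; apply/RlebP => //.
Qed.

End Good.

Open Scope R_scope.
Lemma prodR_ge0 (A : Type) (s : seq A) g : (forall x, 0 <= g x) -> 0 <= prodR s g.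
Proof. move=> H; elim: s => [|a s IH] /=; [lra| apply Rmult_le_pos => //]. Qed.

Lemma prodR_le (A : Type) (s : seq A) g1 g2 : (forall x, 0 <= g1 x) ->
  (forall x, g1 x <= g2 x) -> prodR s g1 <= prodR s g2.
Proof.
move=> H0 H; elim: s => [|a s IH] /=; first lra.
apply Rmult_le_compat => //; exact: prodR_ge0.
Qed.

Lemma prodR_scale (A : Type) (s : seq A) g c :
  prodR s (fun x => c * g x) = c ^ (size s) * prodR s g.
Proof. elim: s => [|a s IH] /=; rewrite ?IH; ring. Qed.

Lemma prod_h (A : Type) (s : seq A) a h : (forall x, 0 <= a x) -> 0 <= h <= 1 ->
  prodR s (fun x => a x + h) <= prodR s a + h * 2 ^ (size s) * prodR s (fun x => a x + 1).
Proof.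
move=> Ha Hh; elim: s => [|x s IH] /=; first lra.
have P0 := prodR_ge0 s Ha.
have PQ : prodR s a <= prodR s (fun x => a x + 1).
  apply: prodR_le => // y; have := Ha y; lra.
have Q0 : 0 <= prodR s (fun x => a x + 1) by apply: prodR_ge0 => y; have := Ha y; lra.
have C1 : 1 <= 2 ^ size s by apply: pow_R1_Rle; lra.
have hx := Ha x.
set P := prodR s a in P0 PQ IH *; set Q := prodR s (fun x => a x + 1) in PQ Q0 IH *.
set C := 2 ^ size s in C1 IH *.
set L := prodR s (fun x => a x + h) in IH *.
have L0 : 0 <= L by apply: prodR_ge0 => y; have := Ha y; lra.
apply: Rle_trans (_ : (a x + h) * (P + h * C * Q) <= _).
  apply: Rmult_le_compat_l; lra.
have E : (a x + h) * (P + h * C * Q) = a x * P + h * (P + a x * C * Q + h * C * Q) by ring.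
rewrite E.
have : h * (P + a x * C * Q + h * C * Q) <= h * (2 * C) * ((a x + 1) * Q); last lra.
have E2 : h * (2 * C) * ((a x + 1) * Q) = h * (2 * C * a x * Q + 2 * C * Q) by ring.
rewrite E2; apply: Rmult_le_compat_l; first lra.
have : P <= C * Q.
  have : 0 <= (C - 1) * Q by apply: Rmult_le_pos; lra.
  lra.
have : h * C * Q <= C * Q.
  have : 0 <= (1 - h) * (C * Q) by apply: Rmult_le_pos; nra.
  lra.
have : 0 <= a x * C * Q by apply: Rmult_le_pos => //; nra.
lra.
Qed.

Lemma bernoulli a b k : 0 <= b <= a -> a * (a - b) ^ k >= a ^ (S k) - INR k * b * a ^ k.
Proof.
move=> H; elim: k => [|k IH] /=; first lra.
change (a * ((a - b) * (a - b) ^ k) >= a * (a * a ^ k) - INR k.+1 * b * (a * a ^ k)); rewrite S_INR.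
have Hp : 0 <= a ^ k by apply: pow_le; lra.
have : (a - b) * (a * (a - b) ^ k) >= (a - b) * (a * a ^ k - INR k * b * a ^ k).
  apply: Rle_ge; apply: Rmult_le_compat_l; first lra.
  change (a ^ k.+1) with (a * a ^ k) in IH; lra.
have := pos_INR k => Hk.
have : 0 <= INR k * b * b * a ^ k by apply: Rmult_le_pos => //; apply: Rmult_le_pos; nra.
nra.
Qed.

Lemma real_limit E F r K n0 : 0 <= E -> 0 < F ->
  (forall N : nat, (n0 <= N)%nat -> INR N * (E - F * r) <= K) -> E <= F * r.
Proof.
move=> HE HF H.
destruct (Rle_dec E (F * r)) as [|Hc] => //.
exfalso.
have Hd : 0 < E - F * r by lra.
have [m Hm] := INR_unbounded (K / (E - F * r)).
have := H (m + n0)%nat (leq_addl m n0).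
rewrite plus_INR.
have : K < INR m * (E - F * r).
  have -> : K = K / (E - F * r) * (E - F * r) by field; lra.
  apply: Rmult_lt_compat_r => //; lra.
have := pos_INR n0; nra.
Qed.

Lemma prodR_ext (A : Type) (s : seq A) g1 g2 : (forall x, g1 x = g2 x) -> prodR s g1 = prodR s g2.
Proof. move=> H; elim: s => [|a s IH] //=; by rewrite IH H. Qed.

Lemma sumR_le (A : Type) (s : seq A) g1 g2 : (forall x, g1 x <= g2 x) -> sumR s g1 <= sumR s g2.
Proof. move=> H; elim: s => [|a s IH] /=; [lra | have := H a; lra]. Qed.

Lemma sumR_INR (A : Type) (s : seq A) (g : A -> nat) : INR (sumn (map g s)) = sumR s (fun x => INR (g x)).
Proof. elim: s => [|a s IH] //=; by rewrite plus_INR IH. Qed.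

Lemma sumR_lin (A : Type) (s : seq A) g1 g2 c d :
  sumR s (fun x => c * (g1 x + d * g2 x)) = c * (sumR s g1 + d * sumR s g2).
Proof. elim: s => [|a s IH] /=; rewrite ?IH; ring. Qed.

Lemma sumR_ge0 (A : Type) (s : seq A) g : (forall x, 0 <= g x) -> 0 <= sumR s g.
Proof. move=> H; elim: s => [|a s IH] /=; [lra | have := H a; lra]. Qed.

Lemma INR_expn m k : INR (m ^ k)%N = INR m ^ k.
Proof. elim: k => [|k IH] //=; by rewrite expnS mult_INR IH. Qed.

Lemma ffact_ge N n : ((N - n) ^ n <= N ^_ n)%N.
Proof.
rewrite ffact_prod -[in X in (X <= _)%N](card_ord n) -prod_nat_const.
apply: leq_prod => i _; apply: leq_sub2l; rewrite card_ord; exact: ltnW (ltn_ord i).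
Qed.

Lemma linext_bound n (e : rel 'I_n) (O : {set 'I_n * 'I_n}) v :
  simple_graph e -> acyclic_orientation e O -> is_volume (in_Stab e) v ->
  INR (n_linext O) <= INR n`! * v.
Proof.
move=> He HO [_ Hv2].
set E := INR (n_linext O); set F := INR n`!.
have HF : 0 < F by apply: lt_0_INR; apply/ltP; exact: fact_gt0.
have HE : 0 <= E by apply: pos_INR.
suff Hw : E / F <= v.
  have -> : E = F * (E / F) by field; lra.
  apply: Rmult_le_compat_l; lra.
apply: Hv2 => r [l [Hcov ->]].
suff : E <= F * sumR l (@box_vol n).
  move=> H; apply: (Rmult_le_reg_l F) => //.
  have -> : F * (E / F) = E by field; lra.
  done.
set rr := sumR l (@box_vol n).
pose len (bx : ('I_n -> R) * ('I_n -> R)) i := Rmax 0 (bx.2 i - bx.1 i).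
have len0 bx i : 0 <= len bx i by apply: Rmax_l.
pose Q bx := prodR (enum 'I_n) (fun i => len bx i + 1).
pose K0 := 2 ^ n * sumR l Q.
apply: (@real_limit E F rr (E * INR n * INR n + F * K0) n.+1) => // N HN.
have N0 : (0 < N)%N by apply: leq_trans HN.
have HnN : (n <= N)%N by apply: ltnW.
set a := INR N; set b := INR n.
have Ha : 1 <= a by rewrite /a; have := le_INR 1 N (leP N0); done.
have Hb : 0 <= b <= a by split; [apply: pos_INR | apply: le_INR; apply/leP].
have Hc := count_main He HO N0 Hcov.
have H1 : INR (n_linext O * 'C(N, n)) <= a ^ n * (rr + / a * K0).
  apply: Rle_trans (le_INR _ _ (leP Hc)) _.
  rewrite sumR_INR /K0 /rr.
  have -> : 2 ^ n * sumR l Q = sumR l (fun bx => 2 ^ n * Q bx).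
    elim: (l) => [|x s IH] /=; [ring | rewrite -IH; ring].
  have E1 : forall bx, prodR (enum 'I_n) (fun i => a * len bx i + 1)
             = a ^ n * prodR (enum 'I_n) (fun i => len bx i + / a).
    move=> bx; have -> : a ^ n = a ^ size (enum 'I_n) by rewrite size_enum_ord.
    rewrite -prodR_scale; apply: prodR_ext => i.
    field; lra.
  apply: Rle_trans (_ : _ <= sumR l (fun bx => a ^ n * (box_vol bx + / a * (2 ^ n * Q bx)))) _.
    apply: sumR_le => bx; apply: Rle_trans (Bset_card bx N0) _.
    rewrite -/a; rewrite (E1 bx).
    apply: Rmult_le_compat_l; first by apply: pow_le; lra.
    have Hh : 0 <= / a <= 1.
      split; first by apply: Rlt_le; apply: Rinv_0_lt_compat; lra.
      rewrite -Rinv_1; apply: Rinv_le_contravar; lra.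
    have := prod_h (enum 'I_n) (len0 bx) Hh; rewrite size_enum_ord => H; apply: Rle_trans H _.
    change (box_vol bx) with (prodR (enum 'I_n) (len bx)); rewrite /Q; lra.
  rewrite sumR_lin; apply: Rle_refl.
have Han : 0 < a ^ n by apply: pow_lt; lra.
have H2 : E * (a - b) ^ n <= INR (n_linext O * 'C(N, n)) * F.
  have -> : a - b = INR (N - n) by rewrite minus_INR //; apply/leP.
  rewrite -INR_expn /E /F -!mult_INR !multE -mulnA bin_ffact.
  apply: le_INR; apply/leP; rewrite leq_mul2l ffact_ge orbT //.
have H3 : E * (a - b) ^ n <= F * (a ^ n * (rr + / a * K0)).
  apply: Rle_trans H2 _; rewrite Rmult_comm; apply: Rmult_le_compat_l; lra.
have Bn := bernoulli n Hb.
change (a ^ n.+1) with (a * a ^ n) in Bn.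
have H4 : E * (a * a ^ n - INR n * b * a ^ n) <= a * (F * (a ^ n * (rr + / a * K0))).
  apply: Rle_trans (_ : E * (a * (a - b) ^ n) <= _).
    apply: Rmult_le_compat_l => //; lra.
  have -> : E * (a * (a - b) ^ n) = a * (E * (a - b) ^ n) by ring.
  apply: Rmult_le_compat_l; lra.
have E5 : a * (F * (a ^ n * (rr + / a * K0))) = a ^ n * (F * (a * rr + K0)) by field; lra.
have E6 : E * (a * a ^ n - INR n * b * a ^ n) = a ^ n * (E * (a - b * b)) by rewrite /b; ring.
rewrite E5 E6 in H4.
have H5 := Rmult_le_reg_l _ _ _ Han H4.
lra.
Qed.


Lemma vol_ge0 n (e : rel 'I_n) v : is_volume (in_Stab e) v -> 0 <= v.
Proof.
move=> [_ H]; apply: H => r [l [_ ->]].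
apply: sumR_ge0 => bx; apply: prodR_ge0 => i; apply: Rmax_l.
Qed.

Close Scope R_scope.

Theorem mainTheorem7 (n : nat) (e : rel 'I_n) (v : R) :
  simple_graph e ->
  is_volume (in_Stab e) v ->
  Rle (INR (eps e)) (Rmult (INR (n`!)) v).
Proof.
move=> He Hv; rewrite /eps.
case: (posnP #|[pred O | acyclic_orientation e O]|) => [A0|Apos].
  rewrite big_pred0; last by move=> O; have := card0_eq A0 O.
  apply: Rmult_le_pos; [exact: pos_INR | exact: vol_ge0 Hv].
have [O0 HO0 ->] := eq_bigmax_cond (fun O => n_linext O) Apos.
exact: linext_bound He HO0 Hv.
Qed.
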